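(* Consider the following stochastic system on a time horizon $\{0,\dots,T\}$. The plant evolves as $x^{t+1}=F_t(x^t,v^t)$ with $F_t:\mathbb{R}^n\times\mathbb{R}^m\to\mathbb{R}^n$, where $v^t=b^tu^t$, $u^t\in\mathbb{R}^m$ is the controller's action and $b^t\in\{0,1\}$ is the transmission state of the link. The link regime $s^t$ takes values in the finite set $\mathcal{F}=\{1,\dots,|\mathcal{F}|\}$; at each time $t$ the jammer takes an action $a^t\in\mathcal{A}=\{1,\dots,N\}$, which selects a row-stochastic matrix $P^t(a^t)\in\mathbb{R}^{|\mathcal{F}|\times|\mathcal{F}|}$, and the new regime is drawn according to $\mathrm{Pr}(s^{t+1}=i\mid s^t=j,a^t=a)=P^t_{ji}(a)$ (conditionally on $s^t,a^t$, independently of the rest of the past). Given $s^{t+1}$, the variable $b^t$ is conditionally independent of all previous regimes, of the current and past plant states and of the current and past actions of both players, with $\mathrm{Pr}(b^t=1\mid s^{t+1}=j)=q^t_j\in[0,1]$. Then, given a sequence of controller's and jammer's actions, the joint state-link process $\{(x^t,s^t)\}_{t=0}^T$ is a Markov process: for every $t=0,\dots,T-1$ and all Borel sets $\Lambda\subseteq\mathbb{R}^n$, $S\subseteq\mathcal{F}$, \[ \mathrm{Pr}\big(x^{t+1}\in\Lambda,s^{t+1}\in S\,\big|\,\{(x^\theta,s^\theta),u^\theta,a^\theta\}_{\theta=0}^t\big)=\mathrm{Pr}\big(x^{t+1}\in\Lambda,s^{t+1}\in S\,\big|\,x^t,s^t,u^t,a^t\big). \]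
   Context: The initial plant state $x^0$ and the initial regime $s^0$ are given (deterministic). $P^t_{ji}(a)$ denotes the $(j,i)$ entry of $P^t(a)$. *)

(* Defs.v *)
From HB Require Import structures.
From mathcomp Require Import all_boot all_order all_algebra.
From mathcomp Require Import all_classical all_reals all_analysis.
Set Implicit Arguments. Unset Strict Implicit. Unset Printing Implicit Defensive.
Import Order.TTheory GRing.Theory Num.Theory.
Import numFieldNormedType.Exports.
Local Open Scope classical_set_scope.
Local Open Scope ring_scope.

Definition Pr d (T : measurableType d) (R : realType) (P : probability T R)
  (A : set T) : R := fine (P A).

(* elementary conditional probability Pr(A | B) = Pr(A /\ B) / Pr(B)
   (all conditioning events below are discrete and used only when Pr(B) > 0) *)
Definition cPr d (T : measurableType d) (R : realType) (P : probability T R)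
  (A B : set T) : R := Pr P (A `&` B) / Pr P B.

Definition ev (T V : Type) (X : T -> V) (v : V) : set T := [set w | X w = v].

Definition cond_indep d (T : measurableType d) (R : realType) (P : probability T R)
  (A B C : eqType) (X : T -> A) (Y : T -> B) (Z : T -> C) : Prop :=
  forall (x : A) (y : B) (z : C), 0 < Pr P (ev Z z) ->
    cPr P (ev X x `&` ev Y y) (ev Z z) =
    cPr P (ev X x) (ev Z z) * cPr P (ev Y y) (ev Z z).

Fixpoint plant (T : Type) (R : realType) (n m : nat)
  (F : nat -> 'rV[R]_n -> 'rV[R]_m -> 'rV[R]_n) (x0 : 'rV[R]_n)
  (u : nat -> 'rV[R]_m) (b : nat -> T -> bool) (t : nat) (w : T) : 'rV[R]_n :=
  match t with
  | 0 => x0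
  | t'.+1 => F t' (plant F x0 u b t' w) ((b t' w)%:R *: u t')
  end.

Definition borel_rV (R : realType) (n : nat) (L : set 'rV[R]_n) : Prop :=
  (<<s [set U : set 'rV[R]_n | open U] >>) L.

(* Main.v *)
Require Import Defs.
From HB Require Import structures.
From mathcomp Require Import all_boot all_order all_algebra.
From mathcomp Require Import all_classical all_reals all_analysis.
From mathcomp Require Import ring lra.
Import Order.TTheory GRing.Theory Num.Theory.
Import numFieldNormedType.Exports.
Local Open Scope classical_set_scope.
Local Open Scope ring_scope.
Set Implicit Arguments.


Definition fin_rv {d} {T : measurableType d} {V : eqType} (Y : T -> V) :=
  (exists L : seq V, forall w, Y w \in L) /\ forall y, measurable (ev Y y).

Lemma meas_in d (T : measurableType d) (V : eqType) (Y : T -> V) (L : seq V) :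
  (forall y, measurable (ev Y y)) -> measurable [set w | Y w \in L].
Proof.
move=> HY; elim: L => [|y L IH].
  rewrite (_ : [set w | _] = set0) //; apply/seteqP; split=> w //=.
rewrite (_ : [set w | _] = ev Y y `|` [set w | Y w \in L]); first exact: measurableU.
apply/seteqP; split=> w /=; rewrite in_cons.
  by case/orP => [/eqP|] ; [left|right].
by case => [->|->]; rewrite ?eqxx ?orbT.
Qed.

Lemma fin_rv_pred d (T : measurableType d) (V : eqType) (Y : T -> V) (B : pred V) :
  fin_rv Y -> measurable [set w | B (Y w)].
Proof.
move=> [[L HL] HY].
rewrite (_ : [set w | _] = [set w | Y w \in seq.filter B L]); first exact: meas_in.
by apply/seteqP; split=> w /=; rewrite mem_filter HL andbT.
Qed.

Lemma fin_rv_const d (T : measurableType d) (V : eqType) (v : V) :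
  fin_rv (fun _ : T => v).
Proof.
split; first by exists [:: v] => w; rewrite mem_seq1.
move=> y; case: (eqVneq v y) => [->|ne].
  by rewrite (_ : ev _ _ = setT) //; apply/seteqP; split.
rewrite (_ : ev _ _ = set0) //; apply/seteqP; split=> w //= e.
by rewrite e eqxx in ne.
Qed.

Lemma fin_rv_pair d (T : measurableType d) (U V : eqType) (X : T -> U) (Y : T -> V) :
  fin_rv X -> fin_rv Y -> fin_rv (fun w => (X w, Y w)).
Proof.
move=> [[LX HX] mX] [[LY HY] mY]; split.
  by exists [seq (x, y) | x <- LX, y <- LY] => w; apply: allpairs_f.
case=> x y; rewrite (_ : ev _ _ = ev X x `&` ev Y y); first exact: measurableI.
by apply/seteqP; split=> w; rewrite /ev /=; [case=> -> ->| case=> -> ->].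
Qed.

Lemma fin_rv_comp d (T : measurableType d) (U V : eqType) (f : U -> V) (X : T -> U) :
  fin_rv X -> fin_rv (fun w => f (X w)).
Proof.
move=> [[LX HX] mX]; split.
  by exists (map f LX) => w; apply: map_f.
move=> v; rewrite (_ : ev _ _ = [set w | (fun x => f x == v) (X w)]).
  by apply: (@fin_rv_pred _ _ _ X (fun x => f x == v)); split; [exists LX|].
by apply/seteqP; split=> w; rewrite /ev /=; [move->|move/eqP].
Qed.

Lemma fin_rv_seq d (T : measurableType d) (V : eqType) (X : nat -> T -> V) k m :
  (forall th, fin_rv (X th)) -> fin_rv (fun w => [seq X th w | th <- iota m k]).
Proof.
move=> HX; elim: k m => [|k IH] m /=; first exact: fin_rv_const.
have := fin_rv_comp (seq V : eqType) (fun p : V * seq V => p.1 :: p.2) (fin_rv_pair (HX m) (IH m.+1)).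
by [].
Qed.


Lemma Pr_fin d (T : measurableType d) (R : realType) (P : probability T R) A :
  measurable A -> P A \is a fin_num.
Proof. by move=> mA; apply: fin_num_measure. Qed.

Lemma Pr_ge0 d (T : measurableType d) (R : realType) (P : probability T R) A :
  0 <= Pr P A.
Proof. exact/fine_ge0/measure_ge0. Qed.

Lemma Pr_le d (T : measurableType d) (R : realType) (P : probability T R) A B :
  measurable A -> measurable B -> A `<=` B -> Pr P A <= Pr P B.
Proof.
move=> mA mB AB; apply: fine_le; try exact: Pr_fin.
by apply: le_measure => //; rewrite inE.
Qed.

Lemma Pr_set0 d (T : measurableType d) (R : realType) (P : probability T R) :
  Pr P set0 = 0.
Proof. by rewrite /Pr measure0. Qed.

Lemma Pr_U d (T : measurableType d) (R : realType) (P : probability T R) A B :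
  measurable A -> measurable B -> A `&` B = set0 -> Pr P (A `|` B) = Pr P A + Pr P B.
Proof.
move=> mA mB AB; rewrite /Pr measureU // fineD //; exact: Pr_fin.
Qed.

Lemma Pr_sum d (T : measurableType d) (R : realType) (P : probability T R)
  (V : eqType) (Y : T -> V) (E : set T) (L : seq V) :
  measurable E -> (forall y, measurable (ev Y y)) -> uniq L ->
  Pr P (E `&` [set w | Y w \in L]) = \sum_(y <- L) Pr P (E `&` ev Y y).
Proof.
move=> mE mY; elim: L => [|y L IH] /=.
  move=> _; rewrite big_nil -[RHS](Pr_set0 P); congr Pr.
  by apply/seteqP; split=> w //= [].
case/andP=> yL uL; rewrite big_cons -IH //.
rewrite (_ : _ `&` _ = (E `&` ev Y y) `|` (E `&` [set w | Y w \in L])).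
  apply: Pr_U; try (apply: measurableI => //; exact: meas_in).
  apply/seteqP; split=> w //= [[_ e] [_ h]]; move: h; rewrite /ev in e.
  by rewrite e (negbTE yL).
apply/seteqP; split=> w /=.
  case=> Ew; rewrite in_cons => /orP [/eqP e|h]; [by left|by right].
case=> -[Ew h]; split=> //; rewrite in_cons; [by move: h; rewrite /ev => ->; rewrite eqxx | by rewrite h orbT].
Qed.


Lemma Pr_sum_pred d (T : measurableType d) (R : realType) (P : probability T R)
  (V : eqType) (Y : T -> V) (L : seq V) (E : set T) (B : pred V) :
  (forall w, Y w \in L) -> (forall y, measurable (ev Y y)) -> measurable E ->
  Pr P (E `&` [set w | B (Y w)]) = \sum_(y <- undup L | B y) Pr P (E `&` ev Y y).
Proof.
move=> HL mY mE.
rewrite -big_filter -Pr_sum //; last exact/filter_uniq/undup_uniq.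
congr Pr; congr (_ `&` _); apply/seteqP; split=> w /=.
  by move=> h; rewrite mem_filter h mem_undup HL.
by rewrite mem_filter => /andP[].
Qed.

Lemma ci_event d (T : measurableType d) (R : realType) (P : probability T R)
  (U V W : eqType) (X : T -> U) (Y : T -> V) (Z : T -> W) (L : seq V) (B : pred V) x z :
  cond_indep P X Y Z ->
  (forall w, Y w \in L) -> (forall y, measurable (ev Y y)) ->
  measurable (ev X x) -> measurable (ev Z z) ->
  Pr P ((ev X x `&` ev Z z) `&` [set w | B (Y w)]) * Pr P (ev Z z) =
  Pr P (ev X x `&` ev Z z) * Pr P (ev Z z `&` [set w | B (Y w)]).
Proof.
move=> ci HL mY mX mZ.
have mXZ : measurable (ev X x `&` ev Z z) by exact: measurableI.
have [p0|ppos] := eqVneq (Pr P (ev Z z)) 0.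
  have : Pr P (ev X x `&` ev Z z) = 0.
    apply/eqP; rewrite eq_le Pr_ge0 andbT -p0; apply: Pr_le => //.

  by move=> ->; rewrite p0 !mulr0 mul0r.
have pgt : 0 < Pr P (ev Z z) by rewrite lt0r ppos Pr_ge0.
rewrite (@Pr_sum_pred _ _ _ P _ Y L _ B HL mY) //.
rewrite (@Pr_sum_pred _ _ _ P _ Y L _ B HL mY) //.
rewrite big_distrl big_distrr /=; apply: eq_bigr => y _.
have := ci x y z pgt; rewrite /cPr => h.
have e1 : ev X x `&` ev Z z `&` ev Y y = (ev X x `&` ev Y y) `&` ev Z z.
  by rewrite setIAC.
have e2 : ev Z z `&` ev Y y = ev Y y `&` ev Z z by rewrite setIC.
rewrite e1 e2.
have -> : Pr P (ev X x `&` ev Y y `&` ev Z z) = (Pr P (ev X x `&` ev Y y `&` ev Z z) / Pr P (ev Z z)) * Pr P (ev Z z).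
  by rewrite mulfVK.
rewrite h; field; exact: ppos.
Qed.

Lemma ci_event' d (T : measurableType d) (R : realType) (P : probability T R)
  (U V W : eqType) (X : T -> U) (Y : T -> V) (Z : T -> W) (L : seq V) (B : pred V)
  (H : set T) x z :
  H = [set w | B (Y w)] ->
  cond_indep P X Y Z ->
  (forall w, Y w \in L) -> (forall y, measurable (ev Y y)) ->
  measurable (ev X x) -> measurable (ev Z z) ->
  Pr P ((ev X x `&` ev Z z) `&` H) * Pr P (ev Z z) =
  Pr P (ev X x `&` ev Z z) * Pr P (ev Z z `&` H).
Proof. by move=> ->; apply: ci_event. Qed.

Lemma Pr_sum_pred' d (T : measurableType d) (R : realType) (P : probability T R)
  (V : eqType) (Y : T -> V) (L : seq V) (E H : set T) (B : pred V) :
  H = [set w | B (Y w)] ->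
  (forall w, Y w \in L) -> (forall y, measurable (ev Y y)) -> measurable E ->
  Pr P (E `&` H) = \sum_(y <- undup L | B y) Pr P (E `&` ev Y y).
Proof. by move=> ->; apply: Pr_sum_pred. Qed.

Lemma map_iota_ext (V : Type) (f g : nat -> V) k :
  (forall th, (th < k)%N -> f th = g th) ->
  [seq f th | th <- iota 0 k] = [seq g th | th <- iota 0 k].
Proof. by move=> h; apply/eq_in_map => th; rewrite mem_iota add0n => /andP[_]; exact: h. Qed.

Lemma map_iota_ext_inv (V : Type) (f g : nat -> V) k :
  [seq f th | th <- iota 0 k] = [seq g th | th <- iota 0 k] ->
  forall th, (th < k)%N -> f th = g th.
Proof. by move/eq_in_map => h th lt; apply: h; rewrite mem_iota add0n. Qed.

Unset Implicit Arguments.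

#[local] Arguments iota : simpl never.

Theorem proposition1
  (R : realType) (d : measure_display) (Omega : measurableType d)
  (P : probability Omega R)
  (n m K N Th : nat)
  (F : nat -> 'rV[R]_n -> 'rV[R]_m -> 'rV[R]_n)
  (x0 : 'rV[R]_n) (s0 : 'I_K)
  (u : nat -> 'rV[R]_m)            (* controller's action sequence *)
  (a : nat -> 'I_N)                (* jammer's action sequence *)
  (Pm : nat -> 'I_N -> 'M[R]_K)    (* P^t(a) *)
  (q : nat -> 'I_K -> R)           (* q^t_j *)
  (s : nat -> Omega -> 'I_K)       (* link regime process *)
  (b : nat -> Omega -> bool)       (* transmission state process *)
  (HPm_nonneg : forall t a' j i, 0 <= Pm t a' j i)
  (HPm_row : forall t a' j, \sum_(i < K) Pm t a' j i = 1)
  (Hq : forall t j, 0 <= q t j <= 1)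
  (Hs_meas : forall t i, measurable (ev (s t) i))
  (Hb_meas : forall t c, measurable (ev (b t) c))
  (Hs0 : forall w, s 0%N w = s0)
  (* regime transition *)
  (Hs_trans : forall t, (t < Th)%N -> forall (j i : 'I_K),
      0 < Pr P (ev (s t) j) ->
      cPr P (ev (s t.+1) i) (ev (s t) j) = Pm t (a t) j i)
  (* ... conditionally on s^t, independently of the rest of the past *)
  (Hs_indep : forall t, (t < Th)%N ->
      cond_indep P (s t.+1)
        (fun w => ([seq s th w | th <- iota 0 t.+1],
                   [seq plant F x0 u b th w | th <- iota 0 t.+1],
                   [seq b th w | th <- iota 0 t]))
        (s t))
  (* transmission probability given the new regime *)
  (Hb_prob : forall t, (t < Th)%N -> forall j : 'I_K,
      0 < Pr P (ev (s t.+1) j) ->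
      cPr P (ev (b t) true) (ev (s t.+1) j) = q t j)
  (* b^t cond. independent of previous regimes and current/past plant states *)
  (Hb_indep : forall t, (t < Th)%N ->
      cond_indep P (b t)
        (fun w => ([seq s th w | th <- iota 0 t.+1],
                   [seq plant F x0 u b th w | th <- iota 0 t.+1]))
        (s t.+1)) :
  forall t, (t < Th)%N ->
  forall (Lam : set 'rV[R]_n) (S : set 'I_K), borel_rV Lam ->
  forall (hx : nat -> 'rV[R]_n) (hs : nat -> 'I_K),
    let A := [set w | Lam (plant F x0 u b t.+1 w) /\ S (s t.+1 w)] in
    let Hist := [set w | forall th, (th <= t)%N ->
                   plant F x0 u b th w = hx th /\ s th w = hs th] in
    let Cur := [set w | plant F x0 u b t w = hx t /\ s t w = hs t] in
    0 < Pr P Hist ->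
    cPr P A Hist = cPr P A Cur.
Proof.
move=> t Ht Lam S _ hx hs A Hist Cur PHist.
have fs : forall th, fin_rv (s th).
  by move=> th; split=> //; exists (enum 'I_K) => w; rewrite mem_enum.
have fb : forall th, fin_rv (b th).
  by move=> th; split=> //; exists [:: true; false] => w; case: (b th w).
have fplant : forall th, fin_rv (plant F x0 u b th).
  elim=> [|th IH]; first by have := @fin_rv_const _ Omega _ x0.
  have := fin_rv_comp _ (fun p : 'rV[R]_n * bool => F th p.1 ((p.2 : nat)%:R *: u th)) (fin_rv_pair IH (fb th)).
  by [].
have fY2 := fin_rv_pair (fin_rv_seq s t.+1 0 fs) (fin_rv_seq (plant F x0 u b) t.+1 0 fplant).
have fZ3 := fin_rv_pair fY2 (fin_rv_seq b t 0 fb).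
case: fY2 => [[L2 HL2] mY2].
case: fZ3 => [[L3 HL3] mY3].
case: (fin_rv_pair (fb t) (fs t.+1)) => [[Lb HLb] mYb].
pose j := hs t.
pose good := fun y : bool * 'I_K =>
  `[< Lam (F t (hx t) ((y.1 : nat)%:R *: u t)) /\ S y.2 >].
pose g := fun y : bool * 'I_K =>
  Pr P (ev (b t) y.1 `&` ev (s t.+1) y.2) * Pr P (ev (s t.+1) y.2 `&` ev (s t) j)
  / (Pr P (ev (s t.+1) y.2) * Pr P (ev (s t) j)).
pose G := \sum_(y <- undup Lb | good y) g y.
have mHgen : forall (BH : pred (seq 'I_K * seq 'rV[R]_n)) (H : set Omega),
  H = [set w | BH ([seq s th w | th <- iota 0 t.+1],
                   [seq plant F x0 u b th w | th <- iota 0 t.+1])] -> measurable H.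
  move=> BH H ->; apply: (fin_rv_pred BH); split; [by exists L2 | exact: mY2].
have key : forall BH : pred (seq 'I_K * seq 'rV[R]_n),
  forall H : set Omega,
  H = [set w | BH ([seq s th w | th <- iota 0 t.+1],
                   [seq plant F x0 u b th w | th <- iota 0 t.+1])] ->
  H `<=` ev (s t) j -> H `<=` [set w | plant F x0 u b t w = hx t] ->
  0 < Pr P H -> cPr P A H = G.
  move=> BH H eH HsH HxH PH.
  have mH : measurable H.
    rewrite eH; apply: (fin_rv_pred BH); split; [by exists L2 | exact: mY2].
  have pj_pos : 0 < Pr P (ev (s t) j).
    exact: (lt_le_trans PH (Pr_le P mH (Hs_meas t j) HsH)).
  have ha : forall i, Pr P (H `&` ev (s t.+1) i) * Pr P (ev (s t) j) =
      Pr P (ev (s t.+1) i `&` ev (s t) j) * Pr P H.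
    move=> i.
    have := @ci_event' _ _ _ P _ _ _ _ (fun w => ([seq s th w | th <- iota 0 t.+1], [seq plant F x0 u b th w | th <- iota 0 t.+1], [seq b th w | th <- iota 0 t])) _ L3 (fun y => BH y.1) H i j eH
      (Hs_indep t Ht) HL3 mY3 (Hs_meas _ _) (Hs_meas _ _).
    have -> : ev (s t.+1) i `&` ev (s t) j `&` H = H `&` ev (s t.+1) i.
      by apply/seteqP; split=> w /=; [case=> -[]|case=> Hw ?; split=> //; split=> //; apply: HsH].
    have -> : ev (s t) j `&` H = H.
      by apply/seteqP; split=> w /=; [case|move=> Hw; split=> //; apply: HsH].
    by [].
  have hb : forall c i, Pr P ((ev (b t) c `&` ev (s t.+1) i) `&` H) * Pr P (ev (s t.+1) i) =
      Pr P (ev (b t) c `&` ev (s t.+1) i) * Pr P (ev (s t.+1) i `&` H).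
    move=> c i.
    exact: (@ci_event' _ _ _ P _ _ _ _ _ _ L2 BH H c i eH
      (Hb_indep t Ht) HL2 mY2 (Hb_meas _ _) (Hs_meas _ _)).
  have hg : forall y, Pr P ((ev (b t) y.1 `&` ev (s t.+1) y.2) `&` H) = g y * Pr P H.
    case=> c i /=.
    have [p0|pnz] := eqVneq (Pr P (ev (s t.+1) i)) 0.
      rewrite /g /= p0 mul0r invr0 mulr0 mul0r.
      apply/eqP; rewrite eq_le Pr_ge0 andbT -p0; apply: Pr_le.
      - by apply: measurableI => //; apply: measurableI.
      - exact: Hs_meas.
      - by move=> w [[]].
    apply: (mulIf pnz); rewrite hb.
    have -> : ev (s t.+1) i `&` H = H `&` ev (s t.+1) i by rewrite setIC.
    have -> : Pr P (H `&` ev (s t.+1) i) =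
        Pr P (ev (s t.+1) i `&` ev (s t) j) * Pr P H / Pr P (ev (s t) j).
      by rewrite -ha mulfK // gt_eqF.
    by rewrite /g /=; field; rewrite pnz gt_eqF.
  have eA : A `&` H = H `&` [set w | good (b t w, s t.+1 w)].
    apply/seteqP; split=> w /=.
      case=> -[hL hS] Hw; split=> //; rewrite /good asboolE /=.
      by move: hL; rewrite /= (HxH w Hw).
    case=> Hw; rewrite /good asboolE /= => -[hL hS]; split=> //; split=> //.
    by rewrite /= (HxH w Hw).
  rewrite /cPr eA (@Pr_sum_pred' _ _ _ P _ _ Lb H _ good erefl HLb mYb mH).
  have -> : \sum_(y <- undup Lb | good y) Pr P (H `&` ev (fun w => (b t w, s t.+1 w)) y)
      = G * Pr P H.
    rewrite /G big_distrl; apply: eq_bigr => y _; rewrite [RHS]/= -hg; congr Pr.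
    apply/seteqP; split=> w /=; case: y => c i /=; rewrite /ev /=.
      by case=> Hw e; case: e => -> ->.
    by case=> -[-> ->] Hw.
  by rewrite mulfK // gt_eqF.
pose BHh := fun y : seq 'I_K * seq 'rV[R]_n => y == ([seq hs th | th <- iota 0 t.+1],
                   [seq hx th | th <- iota 0 t.+1]).
have eHist : Hist = [set w | BHh
       ([seq s th w | th <- iota 0 t.+1], [seq plant F x0 u b th w | th <- iota 0 t.+1])].
  apply/seteqP; split=> w.
    move=> h; apply/eqP; congr (_, _); apply: map_iota_ext => th lt;
      by have [h1 h2] := h th lt.
  move=> /eqP e th le.
  have e1 : [seq s th w | th <- iota 0 t.+1] = [seq hs th | th <- iota 0 t.+1].
    exact: (f_equal fst e).
  have e2 : [seq plant F x0 u b th w | th <- iota 0 t.+1] = [seq hx th | th <- iota 0 t.+1].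
    exact: (f_equal snd e).
  by rewrite (@map_iota_ext_inv _ _ _ _ e1) ?(@map_iota_ext_inv _ _ _ _ e2).
pose BHc := fun y : seq 'I_K * seq 'rV[R]_n =>
         (nth j y.1 t == j) && (nth (hx t) y.2 t == hx t).
have eCur : Cur = [set w | BHc
       ([seq s th w | th <- iota 0 t.+1], [seq plant F x0 u b th w | th <- iota 0 t.+1])].
  apply/seteqP; split=> w.
    case=> e1 e2; apply/andP; split;
      by rewrite (nth_map 0%N) ?size_iota // nth_iota // add0n ?e1 ?e2.
  move/andP=> []; rewrite !(nth_map 0%N) ?size_iota // !nth_iota // add0n.
  by move=> /eqP e1 /eqP e2; split.
have HsHist : Hist `<=` ev (s t) j by move=> w h; exact: (h t (leqnn t)).2.
have HxHist : Hist `<=` [set w | plant F x0 u b t w = hx t].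
  by move=> w h; exact: (h t (leqnn t)).1.
have HsCur : Cur `<=` ev (s t) j by move=> w [].
have HxCur : Cur `<=` [set w | plant F x0 u b t w = hx t] by move=> w [].
have PCur : 0 < Pr P Cur.
  apply: (lt_le_trans PHist); apply: (Pr_le P (mHgen BHh _ eHist) (mHgen BHc _ eCur)).
  move=> w h; have [h1 h2] := h t (leqnn t); by split.
by rewrite (key BHh _ eHist HsHist HxHist PHist) (key BHc _ eCur HsCur HxCur PCur).
Qed.
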